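(* Let $A$ be a superdomain and $S\subseteq A\setminus\{0\}$ with $1\in S$, $S\cdot S\subseteq S$ and $A^2\setminus\{0\}\subseteq S$, where $A^2=\bigcup_{a\in A}a\cdot a$. Then $S$ is a Marshall coherent subset of $A$, and in $A/_mS$ the product $[a][b]$ is a singleton for all $[a],[b]\in A/_mS$.
   Context: Multivalued operations are extended to subsets by unions. A superring is a structure $(S,+,\cdot,-,0,1)$ with multivalued addition and multiplication such that $(S,+,-,0)$ is a commutative multigroup, $(S,\cdot,1)$ is a commutative multimonoid, $a\cdot0=\{0\}$, $c(a+b)\subseteq ca+cb$, and $-(ab)=(-a)b=a(-b)$ (multigroup axioms: $c\in ab\Rightarrow a\in c\,r(b)$ and $b\in r(a)c$; $b\in a\cdot1\iff a=b$; $(ab)c\subseteq a(bc)$; $ab=ba$; multimonoid: the last two and $a\in 1\cdot a$). A superdomain is a nontrivial superring in which $0\in ab$ iff $a=0$ or $b=0$. A subset $S$ of a superring $A$ is Marshall coherent if it is multiplicative ($1\in S$, $S\cdot S\subseteq S$) and whenever $x,a\in A$ and $x\in as$ for some $s\in S$, there are $P,Q\subseteq S$ with $xP=aQ$. For $a,b\in A$, $a\sim_S b$ iff there are nonempty $X,Y\subseteq S$ with $aX=bY$. The Marshall quotient $A/_mS$ is the set of $\sim_S$-classes $[a]$ with: $[c]\in[a]+[b]$ iff there exist $c'\sim c$, $a'\sim a$, $b'\sim b$ with $c'\in a'+b'$; $[c]\in[a][b]$ iff there exist $c'\sim c,a'\sim a,b'\sim b$ with $c'\in a'b'$; $-[a]:=[-a]$;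 zero $[0]$, unit $[1]$. *)

(* Defs.v *)
(* multivalued operations as ternary relations.
   [add a b c] means c ∈ a + b ; [mul a b c] means c ∈ a·b. *)

Record superring := SuperRing {
  car :> Type;
  add : car -> car -> car -> Prop;
  mul : car -> car -> car -> Prop;
  neg : car -> car;
  zero : car;
  one : car;
  add_rev : forall a b c, add a b c -> add c (neg b) a /\ add (neg a) c b;
  add_unit : forall a b, add a zero b <-> a = b;
  add_assoc : forall a b c d,
      (exists x, add a b x /\ add x c d) -> (exists y, add b c y /\ add a y d);
  add_comm : forall a b c, add a b c <-> add b a c;
  mul_assoc : forall a b c d,
      (exists x, mul a b x /\ mul x c d) -> (exists y, mul b c y /\ mul a y d);
  mul_comm : forall a b c, mul a b c <-> mul b a c;
  mul_one : forall a, mul one a a;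
  mul_zero : forall a c, mul a zero c <-> c = zero;
  mul_distr : forall a b c d,
      (exists x, add a b x /\ mul c x d) ->
      exists u v, mul c a u /\ mul c b v /\ add u v d;
  neg_mul_l : forall a b c, (exists d, mul a b d /\ c = neg d) <-> mul (neg a) b c;
  neg_mul_r : forall a b c, (exists d, mul a b d /\ c = neg d) <-> mul a (neg b) c
}.

Arguments add {_}. Arguments mul {_}. Arguments neg {_}.
Arguments zero {_}. Arguments one {_}.

Definition superdomain (A : superring) : Prop :=
  zero <> one :> A /\
  forall a b : A, mul a b zero <-> (a = zero \/ b = zero).

Definition mulset {A : superring} (a : A) (X : A -> Prop) : A -> Prop :=
  fun c => exists x, X x /\ mul a x c.

Definition set_eq {A : Type} (X Y : A -> Prop) : Prop := forall c, X c <-> Y c.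

Definition multiplicative {A : superring} (S : A -> Prop) : Prop :=
  S one /\ forall a b c, S a -> S b -> mul a b c -> S c.

Definition marshall_coherent {A : superring} (S : A -> Prop) : Prop :=
  multiplicative S /\
  forall x a s : A, S s -> mul a s x ->
    exists P Q : A -> Prop,
      (forall p, P p -> S p) /\ (forall q, Q q -> S q) /\
      (exists p, P p) /\ (exists q, Q q) /\
      set_eq (mulset x P) (mulset a Q).

Definition sim {A : superring} (S : A -> Prop) (a b : A) : Prop :=
  exists X Y : A -> Prop,
    (forall x, X x -> S x) /\ (forall y, Y y -> S y) /\
    (exists x, X x) /\ (exists y, Y y) /\
    set_eq (mulset a X) (mulset b Y).

(* [c] ∈ [a][b] in the Marshall quotient A/_m S *)
Definition qmul {A : superring} (S : A -> Prop) (a b c : A) : Prop :=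
  exists c' a' b', sim S c' c /\ sim S a' a /\ sim S b' b /\ mul a' b' c'.

Definition square {A : superring} (c : A) : Prop := exists a, mul a a c.

(* Main.v *)
Require Import Defs.
From Stdlib Require Import Classical.

Ltac sp5 := refine (conj _ (conj _ (conj _ (conj _ _)))).
Ltac sp4 := refine (conj _ (conj _ (conj _ _))).

Definition pr {A : superring} (X Y : A -> Prop) : A -> Prop :=
  fun f => exists x y, X x /\ Y y /\ mul x y f.
Definition sg {A : superring} (a : A) : A -> Prop := fun x => x = a.
Definition sub {T : Type} (X Y : T -> Prop) := forall c, X c -> Y c.
Definition ne {T : Type} (X : T -> Prop) := exists c, X c.

Lemma seq_refl {T} (X : T -> Prop) : set_eq X X.
Proof. intro; tauto. Qed.
Lemma seq_sym {T} (X Y : T -> Prop) : set_eq X Y -> set_eq Y X.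
Proof. intros H c; specialize (H c); tauto. Qed.
Lemma seq_trans {T} (X Y Z : T -> Prop) : set_eq X Y -> set_eq Y Z -> set_eq X Z.
Proof. intros H1 H2 c; specialize (H1 c); specialize (H2 c); tauto. Qed.
Lemma sub_seq {T} (X Y Z : T -> Prop) : set_eq X Y -> sub Y Z -> sub X Z.
Proof. intros H1 H2 c Hc; apply H2, H1, Hc. Qed.
Lemma sub_trans {T} (X Y Z : T -> Prop) : sub X Y -> sub Y Z -> sub X Z.
Proof. intros H1 H2 c Hc; apply H2, H1, Hc. Qed.

Lemma mcomm {A : superring} (a b c : A) : mul a b c -> mul b a c.
Proof. apply mul_comm. Qed.

Lemma assoc_r {A : superring} (a b c x d : A) :
  mul a b x -> mul x c d -> exists y, mul b c y /\ mul a y d.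
Proof. intros; apply mul_assoc; eauto. Qed.

Lemma assoc_l {A : superring} (a b c y d : A) :
  mul b c y -> mul a y d -> exists x, mul a b x /\ mul x c d.
Proof.
  intros H1 H2.
  destruct (assoc_r b c a y d H1 (mcomm _ _ _ H2)) as [z [Hz1 Hz2]].
  destruct (assoc_r c a b z d Hz1 (mcomm _ _ _ Hz2)) as [w [Hw1 Hw2]].
  exists w; split; auto; apply mcomm; auto.
Qed.

Lemma mul0 {A : superring} (b : A) : mul zero b zero.
Proof. apply mcomm, mul_zero; reflexivity. Qed.

Lemma mul0_eq {A : superring} (b c : A) : mul zero b c -> c = zero.
Proof. intro H; apply (mul_zero A b c), mcomm, H. Qed.

Lemma ne_mul {A : superring} (a b : A) : exists c, mul a b c.
Proof.
  destruct (assoc_r zero a b zero zero (mul0 a) (mul0 b)) as [y [Hy _]]; eauto.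
Qed.

Lemma pr_mono {A : superring} (X X' Y Y' : A -> Prop) :
  sub X X' -> sub Y Y' -> sub (pr X Y) (pr X' Y').
Proof. intros H1 H2 f [x [y [Hx [Hy Hm]]]]; exists x, y; auto. Qed.

Lemma pr_cong {A : superring} (X X' Y Y' : A -> Prop) :
  set_eq X X' -> set_eq Y Y' -> set_eq (pr X Y) (pr X' Y').
Proof.
  intros H1 H2 f; split; intros [x [y [Hx [Hy Hm]]]]; exists x, y;
  repeat split; auto; [apply H1|apply H2|apply H1|apply H2]; auto.
Qed.

Lemma pr_comm {A : superring} (X Y : A -> Prop) : set_eq (pr X Y) (pr Y X).
Proof.
  intros f; split; intros [x [y [Hx [Hy Hm]]]]; exists y, x;
  repeat split; auto; apply mcomm; auto.
Qed.

Lemma pr_assoc {A : superring} (X Y Z : A -> Prop) :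
  set_eq (pr (pr X Y) Z) (pr X (pr Y Z)).
Proof.
  intros f; split.
  - intros [e [z [[x [y [Hx [Hy Hm]]]] [Hz Hm2]]]].
    destruct (assoc_r _ _ _ _ _ Hm Hm2) as [w [Hw1 Hw2]].
    exists x, w; repeat split; auto. exists y, z; auto.
  - intros [x [e [Hx [[y [z [Hy [Hz Hm]]]] Hm2]]]].
    destruct (assoc_l _ _ _ _ _ Hm Hm2) as [w [Hw1 Hw2]].
    exists w, z; repeat split; auto. exists x, y; auto.
Qed.

Lemma pr_inter {A : superring} (P Q R T : A -> Prop) :
  set_eq (pr (pr P Q) (pr R T)) (pr (pr P R) (pr Q T)).
Proof.
  eapply seq_trans; [apply pr_assoc|].
  eapply seq_trans; [apply pr_cong; [apply seq_refl| apply seq_sym, pr_assoc]|].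
  eapply seq_trans; [apply pr_cong; [apply seq_refl| apply pr_cong; [apply pr_comm|apply seq_refl]]|].
  eapply seq_trans; [apply pr_cong; [apply seq_refl| apply pr_assoc]|].
  apply seq_sym, pr_assoc.
Qed.

Lemma ne_pr {A : superring} (X Y : A -> Prop) : ne X -> ne Y -> ne (pr X Y).
Proof.
  intros [x Hx] [y Hy]; destruct (ne_mul x y) as [f Hf]; exists f, x, y; auto.
Qed.

Lemma ne_sg {A : superring} (a : A) : ne (sg a).
Proof. exists a; reflexivity. Qed.

Lemma mulset_pr {A : superring} (a : A) X : set_eq (mulset a X) (pr (sg a) X).
Proof.
  intros f; split.
  - intros [x [Hx Hm]]; exists a, x; repeat split; auto.
  - intros [a' [x [Ha [Hx Hm]]]]; unfold sg in Ha; subst; exists x; auto.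
Qed.

Lemma pr_sg {A : superring} (a b c : A) : mul a b c -> sub (sg c) (pr (sg a) (sg b)).
Proof. intros H f Hf; unfold sg in Hf; subst; exists a, b; repeat split; auto. Qed.

Definition simp {A : superring} (S : A -> Prop) (a b : A) : Prop :=
  exists X Y : A -> Prop, sub X S /\ sub Y S /\ ne X /\ ne Y /\
    set_eq (pr (sg a) X) (pr (sg b) Y).

Lemma sim_simp {A : superring} (S : A -> Prop) a b : sim S a b <-> simp S a b.
Proof.
  split; intros [X [Y [H1 [H2 [H3 [H4 H5]]]]]]; exists X, Y; sp5; auto.
  - eapply seq_trans; [apply seq_sym, mulset_pr|]. eapply seq_trans; [apply H5|].
    apply mulset_pr.
  - eapply seq_trans; [apply mulset_pr|]. eapply seq_trans; [apply H5|].
    apply seq_sym, mulset_pr.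
Qed.

Lemma simp_refl {A : superring} (S : A -> Prop) a : S one -> simp S a a.
Proof.
  intros H; exists (sg one), (sg one); sp5; try apply ne_sg; try apply seq_refl;
  intros c Hc; unfold sg in Hc; subst; auto.
Qed.

Lemma simp_sym {A : superring} (S : A -> Prop) a b : simp S a b -> simp S b a.
Proof.
  intros [X [Y [H1 [H2 [H3 [H4 H5]]]]]]; exists Y, X; sp5; auto.
  apply seq_sym; auto.
Qed.

Lemma simp_trans {A : superring} (S : A -> Prop) a b c :
  (forall a b c, S a -> S b -> mul a b c -> S c) ->
  simp S a b -> simp S b c -> simp S a c.
Proof.
  intros Hcl [X [Y [H1 [H2 [H3 [H4 H5]]]]]] [U [V [G1 [G2 [G3 [G4 G5]]]]]].
  assert (prS : forall P Q : A -> Prop, sub P S -> sub Q S -> sub (pr P Q) S).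
  { intros P Q HP HQ f [x [y [Hx [Hy Hm]]]]; apply (Hcl x y f); auto. }
  exists (pr X U), (pr V Y); sp5; auto using ne_pr.
  eapply seq_trans; [apply seq_sym, pr_assoc|].
  eapply seq_trans; [apply pr_cong; [apply H5|apply seq_refl]|].
  eapply seq_trans; [apply pr_assoc|].
  eapply seq_trans; [apply pr_cong; [apply seq_refl|apply pr_comm]|].
  eapply seq_trans; [apply seq_sym, pr_assoc|].
  eapply seq_trans; [apply pr_cong; [apply G5|apply seq_refl]|].
  apply pr_assoc.
Qed.

Theorem theorem4p7 (A : superring) (S : A -> Prop) :
  superdomain A ->
  (forall s, S s -> s <> zero) ->
  S one ->
  (forall a b c, S a -> S b -> mul a b c -> S c) ->
  (forall c, square c -> c <> zero -> S c) ->
  marshall_coherent S /\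
  (forall a b : A, exists c : A, forall d : A, qmul S a b d <-> sim S d c).
Proof.
  intros [Hnt Hdom] HS0 H1 Hcl Hsq.
  assert (prS : forall P Q : A -> Prop, sub P S -> sub Q S -> sub (pr P Q) S).
  { intros P Q HP HQ f [x [y [Hx [Hy Hm]]]]; apply (Hcl x y f); auto. }
  assert (SQ : forall a : A, a <> zero -> sub (pr (sg a) (sg a)) S).
  { intros a Ha f [x [y [Hx [Hy Hm]]]]; unfold sg in *; subst.
    apply Hsq; [exists a; auto|]. intro E; subst. apply Hdom in Hm; tauto. }
  assert (sgS : forall s, S s -> sub (sg s) S).
  { intros s Hs c Hc; unfold sg in Hc; subst; auto. }
  assert (Z0 : forall a b, simp S a b -> a = zero -> b = zero).
  { intros a b [X [Y [G1 [G2 [[x Hx] [G4 G5]]]]]] Ha; subst.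
    destruct (proj1 (G5 zero)) as [b' [y [Hb [Hy Hm]]]].
    { exists zero, x; repeat split; auto; apply mul0. }
    unfold sg in Hb; subst. apply Hdom in Hm as [Hm|Hm]; auto.
    subst; exfalso; apply (HS0 zero); auto. }
  assert (G : forall a b (X U : A -> Prop), a <> zero -> b <> zero -> sub X S -> sub U S ->
     sub (pr (pr (sg a) (sg b)) (pr (pr (sg a) X) (pr (sg b) U))) S).
  { intros a b X U Ha Hb HX HU.
    eapply sub_seq; [apply pr_cong; [apply seq_refl|apply pr_inter]|].
    eapply sub_seq; [apply seq_sym, pr_assoc|].
    eapply sub_seq; [apply pr_cong; [apply pr_inter|apply seq_refl]|].
    apply prS; auto. }
  split.
  - split; [split; auto|].
    intros x a s Hs Hm.
    destruct (classic (a = zero)) as [Ha|Ha].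
    + subst. pose proof (mul0_eq _ _ Hm); subst.
      exists (sg one), (sg one); sp5; try apply ne_sg; try apply sgS; auto; apply seq_refl.
    + exists (pr (sg a) (sg a)), (pr (sg x) (sg a));
      sp5; try (apply ne_pr; apply ne_sg); try apply SQ; auto.
      * eapply sub_trans; [apply pr_mono; [apply (pr_sg s a x (mcomm _ _ _ Hm))|intros c Hc; exact Hc]|].
        eapply sub_seq; [apply pr_assoc|]. apply prS; auto.
      * eapply seq_trans; [apply mulset_pr|].
        eapply seq_trans; [apply seq_sym, pr_assoc|].
        eapply seq_trans; [apply pr_comm|].
        apply seq_sym, mulset_pr.
  - assert (KEY : forall a b c a' b' c', simp S a' a -> simp S b' b ->
       mul a' b' c' -> mul a b c -> simp S c' c).
    { intros a b c a' b' c' Sa Sb Hm' Hm.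
      destruct (classic (a = zero)) as [Ha|Ha].
      { pose proof (Z0 _ _ (simp_sym _ _ _ Sa) Ha); subst.
        rewrite (mul0_eq _ _ Hm), (mul0_eq _ _ Hm'). apply simp_refl; auto. }
      destruct (classic (b = zero)) as [Hb|Hb].
      { pose proof (Z0 _ _ (simp_sym _ _ _ Sb) Hb); subst.
        rewrite (mul0_eq _ _ (mcomm _ _ _ Hm)), (mul0_eq _ _ (mcomm _ _ _ Hm')).
        apply simp_refl; auto. }
      assert (Ha' : a' <> zero) by (intro E; apply Ha; apply (Z0 _ _ Sa E)).
      assert (Hb' : b' <> zero) by (intro E; apply Hb; apply (Z0 _ _ Sb E)).
      destruct Sa as [X [Y [X1 [Y1 [X2 [Y2 XY]]]]]].
      destruct Sb as [U [V [U1 [V1 [U2 [V2 UV]]]]]].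
      set (W0 := pr (pr (sg a') X) (pr (sg b') U)).
      exists (pr (sg c) W0), (pr (sg c') W0); sp5; try (apply ne_pr; [apply ne_sg| apply ne_pr; apply ne_pr; auto; apply ne_sg]).
      - eapply sub_trans; [apply pr_mono; [apply (pr_sg _ _ _ Hm)|intros e He; exact He]|].
        eapply sub_seq; [apply pr_cong; [apply seq_refl|apply pr_cong; [apply XY|apply UV]]|].
        apply G; auto.
      - eapply sub_trans; [apply pr_mono; [apply (pr_sg _ _ _ Hm')|intros e He; exact He]|].
        apply G; auto.
      - eapply seq_trans; [apply seq_sym, pr_assoc|].
        eapply seq_trans; [apply pr_cong; [apply pr_comm|apply seq_refl]|].
        apply pr_assoc. }
    intros a b. destruct (ne_mul a b) as [c Hc]. exists c. intro d. split.
    + intros [c' [a' [b' [Hc' [Ha' [Hb' Hm]]]]]].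
      apply sim_simp. apply sim_simp in Hc'; apply sim_simp in Ha'; apply sim_simp in Hb'.
      eapply simp_trans; [exact Hcl|apply simp_sym, Hc'|].
      exact (KEY a b c a' b' c' Ha' Hb' Hm Hc).
    + intros Hd. exists c, a, b; sp4; auto.
      * apply sim_simp, simp_sym, sim_simp, Hd.
      * apply sim_simp, simp_refl; auto.
      * apply sim_simp, simp_refl; auto.
Qed.
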